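(* Let $k\ge2$ and let $L_{01}\in\mathbb{R}^{k\times k}$ be the 0-1 loss, $L_{01}(i,j)=[i\ne j]$, with quadratic surrogate $\Phi_{quad}(f,y)=\frac1{2k}\|f+L_{01}(:,y)\|_2^2$. Then $$H_{\Phi_{quad},L_{01},\mathbb{R}^k}(\varepsilon)=\frac{\varepsilon^2}{4k},\qquad0\le\varepsilon\le1.$$
   Context: $[A]=1$ if $A$ is true and $0$ otherwise. $\mathrm{pred}(f)$ is the smallest index maximizing $f_c$. For $q\in\Delta_k$: $\ell(f,q)=\sum_cq_cL(\mathrm{pred}(f),c)$, $\phi(f,q)=\sum_cq_c\Phi(f,c)$, $\delta\ell(f,q)=\ell(f,q)-\inf_{\hat f\in\mathcal{F}}\ell(\hat f,q)$, $\delta\phi(f,q)=\phi(f,q)-\inf_{\hat f\in\mathcal{F}}\phi(\hat f,q)$; calibration function $H_{\Phi,L,\mathcal{F}}(\varepsilon)=\inf\{\delta\phi(f,q):f\in\mathcal{F},q\in\Delta_k,\delta\ell(f,q)\ge\varepsilon\}$ ($+\infty$ if empty); here $\mathcal{F}=\mathbb{R}^k$. *)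

(* Defs.v *)
From HB Require Import structures.
From mathcomp Require Import all_boot all_order all_algebra.
From mathcomp Require Import all_classical all_reals all_analysis.
Set Implicit Arguments. Unset Strict Implicit. Unset Printing Implicit Defensive.
Import Order.TTheory GRing.Theory Num.Theory.
Local Open Scope ring_scope.
Local Open Scope classical_set_scope.

Section Defs.
Variables (R : realType) (k : nat).

Definition L01 (i j : 'I_k) : R := if i == j then 0 else 1.

Definition is_argmax (f : 'I_k -> R) (i : 'I_k) : bool := [forall j, f j <= f i].

(* pred f = smallest index maximizing f (None only if k = 0) *)
Definition predf (f : 'I_k -> R) : option 'I_k :=
  [pick i | is_argmax f i && [forall j : 'I_k, (j < i)%N ==> ~~ is_argmax f j]].

Definition simplex : set ('I_k -> R) :=
  [set q | (forall c, 0 <= q c) /\ \sum_c q c = 1].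

Definition Phi_quad (f : 'I_k -> R) (y : 'I_k) : R :=
  (2 * k%:R)^-1 * \sum_c (f c + L01 c y) ^+ 2.

Definition ell (f : 'I_k -> R) (q : 'I_k -> R) : R :=
  match predf f with Some p => \sum_c q c * L01 p c | None => 0 end.

Definition phi (f : 'I_k -> R) (q : 'I_k -> R) : R := \sum_c q c * Phi_quad f c.

Definition dell (f q : 'I_k -> R) : \bar R :=
  ((ell f q)%:E - ereal_inf [set (ell g q)%:E | g in [set: 'I_k -> R]])%E.

Definition dphi (f q : 'I_k -> R) : \bar R :=
  ((phi f q)%:E - ereal_inf [set (phi g q)%:E | g in [set: 'I_k -> R]])%E.

(* calibration function H_{Phi_quad, L01, R^k}(eps); ereal_inf set0 = +oo *)
Definition calib (eps : R) : \bar R :=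
  ereal_inf [set dphi fq.1 fq.2 | fq in
     [set fq : ('I_k -> R) * ('I_k -> R) | simplex fq.2 /\ (eps%:E <= dell fq.1 fq.2)%E]].

End Defs.

(* Main.v *)
Require Import Defs.
From HB Require Import structures.
From mathcomp Require Import all_boot all_order all_algebra.
From mathcomp Require Import all_classical all_reals all_analysis.
From mathcomp Require Import ring lra.
Import Order.TTheory GRing.Theory Num.Theory.
Local Open Scope ring_scope.

Section Aux.
Variables (R : realType) (k : nat).

Lemma exists_argmax (f : 'I_k.+1 -> R) : exists i, forall j, f j <= f i.
Proof.
case: (arg_maxP f (i0:=ord0) (P:=xpredT) isT) => i _ H.
by exists i => j; exact: H.
Qed.

Lemma predf_spec (f : 'I_k.+1 -> R) : exists p, predf f = Some p /\
  (forall j, f j <= f p) /\ (forall j : 'I_k.+1, (j < p)%N -> ~~ is_argmax f j).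
Proof.
rewrite /predf; case: pickP => [p /andP[/forallP H /forallP H2]|H].
  exists p; split=> //; split=> // j; exact/implyP/H2.
exfalso. have [i Hi] := exists_argmax f.
have Hi' : is_argmax f i by apply/forallP.
case: (arg_minnP (fun j : 'I_k.+1 => nat_of_ord j) Hi') => m Hm Hmin.
have := H m; rewrite Hm /= => /negbT/forallPn [j].
rewrite negb_imply negbK => /andP[jm aj].
by have := Hmin j aj; rewrite leqNgt jm.
Qed.

Lemma ell_eq (f q : 'I_k.+1 -> R) p : simplex q -> predf f = Some p ->
  ell f q = 1 - q p.
Proof.
move=> [_ Hs] Hp; rewrite /ell Hp -Hs (bigD1 p) //= (bigD1 p (P:=xpredT)) //=.
rewrite /L01 eqxx mulr0 add0r.
have -> : \sum_(i | i != p) q i * (if p == i then 0 else 1) = \sum_(i | i != p) q i.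
  by apply: eq_bigr => i hi; rewrite eq_sym (negbTE hi) mulr1.
ring.
Qed.

Lemma dell_eq (f q : 'I_k.+1 -> R) m p : simplex q -> (forall j, q j <= q m) ->
  predf f = Some p -> dell f q = (q m - q p)%:E.
Proof.
move=> Hq Hm Hp; rewrite /dell.
have -> : ereal_inf [set (ell g q)%:E | g in [set: 'I_k.+1 -> R]] = (1 - q m)%:E.
  apply/le_anti/andP; split.
    apply: ge_ereal_inf.
    pose g := fun c : 'I_k.+1 => if c == m then 1 else 0 : R.
    exists (ell g q)%:E; first by exists g.
    have [p' [Hp' [Ha _]]] := predf_spec g.
    have Hpm : p' = m.
      apply/eqP; have := Ha m; rewrite /g eqxx; case: (p' == m) => //.
      by rewrite ler10.
    by rewrite (ell_eq _ _ _ Hq Hp') Hpm.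
  apply: le_ereal_inf_tmp => _ [g _ <-].
  have [p' [Hp' _]] := predf_spec g.
  by rewrite (ell_eq _ _ _ Hq Hp') lee_fin lerB // Hm.
by rewrite /dell (ell_eq _ _ _ Hq Hp) -EFinB; congr EFin; ring.
Qed.

Lemma phi_eq (f q : 'I_k.+1 -> R) : simplex q ->
  phi f q = (2 * k.+1%:R)^-1 * (\sum_c (f c + 1 - q c) ^+ 2 + \sum_c (q c - q c ^+ 2)).
Proof.
move=> [_ Hs].
rewrite /phi /Phi_quad.
under eq_bigr => y _ do rewrite mulrCA mulr_sumr.
rewrite -mulr_sumr exchange_big /= -big_split /=; congr (_ * _).
apply: eq_bigr => c _.
rewrite (bigD1 c) //= /L01 eqxx addr0.
have -> : \sum_(i | i != c) q i * (f c + (if c == i then 0 else 1)) ^+ 2 =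
          (\sum_(i | i != c) q i) * (f c + 1) ^+ 2.
  rewrite mulr_suml; apply: eq_bigr => i hi; by rewrite eq_sym (negbTE hi).
have -> : \sum_(i | i != c) q i = 1 - q c.
  by move: Hs; rewrite (bigD1 c) //=; lra.
ring.
Qed.

Lemma dphi_eq (f q : 'I_k.+1 -> R) : simplex q ->
  dphi f q = ((2 * k.+1%:R)^-1 * \sum_c (f c + 1 - q c) ^+ 2)%:E.
Proof.
move=> Hq; rewrite /dphi.
have Hk : 0 < (2 * k.+1%:R)^-1 :> R by rewrite invr_gt0 mulr_gt0 // ltr0n.
have -> : ereal_inf [set (phi g q)%:E | g in [set: 'I_k.+1 -> R]] =
   ((2 * k.+1%:R)^-1 * \sum_c (q c - q c ^+ 2))%:E.
  apply/le_anti/andP; split.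
    apply: ge_ereal_inf.
    exists (phi (fun c => q c - 1) q)%:E; first by exists (fun c => q c - 1).
    rewrite (phi_eq _ _ Hq) big1 ?add0r // => c _.
    by rewrite addrNK subrr expr0n.
  apply: le_ereal_inf_tmp => _ [g _ <-].
  rewrite (phi_eq _ _ Hq) lee_fin; apply: ler_wpM2l; first exact: ltW.
  have : 0 <= \sum_c (g c + 1 - q c) ^+ 2 by apply: sumr_ge0 => c _; rewrite sqr_ge0.
  lra.
by rewrite (phi_eq _ _ Hq) -EFinB; congr EFin; ring.
Qed.

End Aux.
Arguments exists_argmax {R k}.
Arguments predf_spec {R k}.
Arguments ell_eq {R k}.
Arguments dell_eq {R k}.
Arguments phi_eq {R k}.
Arguments dphi_eq {R k}.

Theorem proposition12 (R : realType) (k : nat) (hk : (2 <= k)%N) (eps : R)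
  (h0 : 0 <= eps) (h1 : eps <= 1) :
  calib k eps = (eps ^+ 2 / (4 * k%:R))%:E.
Proof.
case: k hk => [|[|k]] // _.
have Hk : 0 < (k.+2)%:R :> R by rewrite ltr0n.
apply/le_anti/andP; split.
  apply: ge_ereal_inf.
  pose i0 : 'I_k.+2 := ord0.
  pose i1 : 'I_k.+2 := Ordinal (isT : (1 < k.+2)%N).
  have i01 : (i0 == i1) = false by [].
  pose q := fun c : 'I_k.+2 => if c == i1 then (1 + eps) / 2
                               else if c == i0 then (1 - eps) / 2 else 0.
  pose f := fun c : 'I_k.+2 => if (c == i0) || (c == i1) then - 2^-1 else -1 : R.
  have Hq : simplex q.
    split.
      move=> c; rewrite /q; case: (c == i1); first lra.
      case: (c == i0); lra.
    rewrite (bigD1 i1) //= (bigD1 i0) ?i01 //= big1.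
      rewrite /q !eqxx i01; lra.
    by move=> c /andP[H1 H0]; rewrite /q (negbTE H1) (negbTE H0).
  have [p [Hp [Ha Hmin]]] := predf_spec f.
  have Hp0 : p = i0.
    case E0: (p == i0); first by move/eqP: E0.
    case E1: (p == i1); last first.
      exfalso; have := Ha i0; rewrite /f eqxx /= E0 E1 /=; lra.
    exfalso; have := Hmin i0; move/eqP: E1 => ->.
    rewrite /= => /(_ isT) /forallP; apply; move=> j; rewrite /f.
    case: ((j == i0) || (j == i1)) => /=; lra.
  have Hm : forall j, q j <= q i1.
    move=> j; rewrite /q eqxx; case: (j == i1); first lra.
    case: (j == i0); lra.
  exists (dphi f q).
    exists (f, q) => //; split => //=.
    rewrite (dell_eq _ _ _ _ Hq Hm Hp) Hp0 lee_fin /q !eqxx i01; lra.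
  rewrite (dphi_eq _ _ Hq) lee_fin.
  rewrite (bigD1 i1) //= (bigD1 i0) ?i01 //= big1.
    rewrite /f /q !eqxx i01 orbT /=.
    rewrite le_eqVlt; apply/orP; left; apply/eqP; field; apply: lt0r_neq0; have := ler0n R k; lra.
  by move=> c /andP[/negbTE H1 /negbTE H0]; rewrite /f /q H1 H0 /=; ring.
apply: le_ereal_inf_tmp => _ [[f q] /= [Hq He] <-].
have [p [Hp [Ha _]]] := predf_spec f.
have [m Hm] := exists_argmax q.
rewrite (dell_eq _ _ _ _ Hq Hm Hp) lee_fin in He.
rewrite (dphi_eq _ _ Hq) lee_fin.
suff H : eps ^+ 2 / 2 <= \sum_c (f c + 1 - q c) ^+ 2.
  have -> : eps ^+ 2 / (4 * k.+2%:R) = (2 * k.+2%:R)^-1 * (eps ^+ 2 / 2).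
    field; by apply/eqP; lra.
  by rewrite ler_wpM2l // invr_ge0 mulr_ge0 // ltW.
have Hge : forall c, 0 <= (f c + 1 - q c) ^+ 2 by move=> c; rewrite sqr_ge0.
case Epm: (p == m).
  move/eqP: Epm He => ->; rewrite subrr => He.
  have -> : eps = 0 by lra.
  by rewrite expr0n /= mul0r sumr_ge0.
rewrite (bigD1 p) //= (bigD1 m) /=; last by rewrite eq_sym Epm.
have Hr : 0 <= \sum_(i | (i != p) && (i != m)) (f i + 1 - q i) ^+ 2 by apply: sumr_ge0.
have Hfm := Ha m.
set a := f p + 1 - q p. set b := f m + 1 - q m.
have Hab : eps <= a - b by rewrite /a /b; lra.
have : 0 <= (a + b) ^+ 2 by rewrite sqr_ge0.
nra.
Qed.
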